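(* For $n\in\{0,1,2,\dots\}$ let \[ d_n=\frac{(-1)^n}{n!}\sum_{k=0}^{n}(-1)^kS(n,k)(2k-3)!!. \] Then $d_n\ge0$ for every $n\in\mathbb{N}=\{1,2,\dots\}$.
   Context: $S(n,k)$ are the Stirling numbers of the second kind, given by $\frac{(e^x-1)^k}{k!}=\sum_{n\ge k}S(n,k)\frac{x^n}{n!}$. Double factorials: $(2j-1)!!=1\cdot3\cdots(2j-1)$ for $j\ge1$, and $[-(2j+1)]!!=(-1)^j/(2j-1)!!$ for $j\ge0$, so $(-1)!!=1$ and $(-3)!!=-1$. *)

(* Defs.v *)
From mathcomp Require Import all_boot all_order all_algebra.
Set Implicit Arguments. Unset Strict Implicit. Unset Printing Implicit Defensive.
Import Order.TTheory GRing.Theory Num.Theory.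
Local Open Scope ring_scope.

(* Stirling numbers of the second kind, obtained by extracting the
   coefficient of x^n/n! in (e^x-1)^k/k! = (1/k!) sum_j C(k,j)(-1)^(k-j) e^(jx). *)
Definition stirling2 (n k : nat) : rat :=
  (k`!%:R)^-1 * \sum_(0 <= j < k.+1) (-1) ^+ (k - j) * 'C(k, j)%:R * (j%:R) ^+ n.

(* odf j = 1*3*...*(2j-1) = (2j-1)!! for j >= 1, and 1 (empty product) for j = 0. *)
Definition odf (j : nat) : rat := \prod_(1 <= i < j.+1) ((2 * i)%N%:R - 1).

(* Double factorial of an odd integer m:
   (2j-1)!! = 1*3*...*(2j-1) for j >= 1, and [-(2j+1)]!! = (-1)^j/(2j-1)!! for j >= 0
   (with (-1)!! = 1).  Values at even m are irrelevant. *)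
Definition dfact (m : int) : rat :=
  match m with
  | Posz n => odf (n.+1)./2          (* n = 2j-1, j = (n+1)/2 *)
  | Negz n => (-1) ^+ (n./2) / odf (n./2)  (* m = -(n+1) = -(2j+1), j = n/2 *)
  end.

Definition d (n : nat) : rat :=
  (-1) ^+ n / n`!%:R *
  \sum_(0 <= k < n.+1) (-1) ^+ k * stirling2 n k * dfact (2 * (k%:Z) - 3)%R.

(* Main.v *)
Require Import Defs.
From mathcomp Require Import all_boot all_order all_algebra.
From mathcomp Require Import ring lra zify.
Import Order.TTheory GRing.Theory Num.Theory.
Local Open Scope ring_scope.

Definition U (n k : nat) : rat := \sum_(j < k.+1) (-1)^+j * 'C(k,j)%:R * (j%:R)^+n.
Definition V (n k : nat) : rat := \sum_(j < k.+1) (-1)^+j * 'C(k,j)%:R * (j.+1%:R)^+n.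

Lemma sign_sub (k i : nat) : (i <= k)%N -> (-1)^+(k - i) = (-1)^+k * (-1)^+i :> rat.
Proof.
by move=> hik; rewrite -{2}(subnK hik) exprD -mulrA -expr2 sqrr_sign mulr1.
Qed.

Lemma stirlingU n k : stirling2 n k = (-1)^+k * U n k / k`!%:R.
Proof.
rewrite /stirling2 /U big_mkord mulrC mulr_sumr; congr (_ * _).
apply: eq_bigr => i _; rewrite sign_sub; last by rewrite -ltnS ltn_ord.
by rewrite !mulrA.
Qed.

Lemma U_S n k : U n.+1 k.+1 = - (k.+1%:R) * V n k.
Proof.
rewrite /U /V big_ord_recl /= expr0n /= mulr0 add0r mulr_sumr.
apply: eq_bigr => i _; rewrite /bump /= add1n.
have h := mul_bin_diag k.+1 i; rewrite /= in h.
have hc : ('C(k.+1, i.+1)%:R : rat) * i.+1%:R = k.+1%:R * 'C(k, i)%:R.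
  by rewrite -!natrM mulnC h.
rewrite exprS [X in _ * X = _]exprS.
transitivity ((-1 : rat) * (-1) ^+ i * ('C(k.+1, i.+1)%:R * i.+1%:R) * i.+1%:R ^+ n); first by ring.
rewrite hc; ring.
Qed.

Lemma U_V n k : U n k.+1 = U n k - V n k.
Proof.
rewrite /U /V big_ord_recl [in RHS]big_ord_recl /=.
rewrite !bin0.
have hX : \sum_(i < k.+1) (-1)^+i * 'C(k, i.+1)%:R * (i.+1%:R)^+n
   = \sum_(i < k) (-1)^+i * 'C(k, i.+1)%:R * (i.+1%:R)^+n :> rat.
  by rewrite big_ord_recr /= bin_small // mulr0 mul0r addr0.
have e1 : \sum_(i < k.+1) (-1) ^+ bump 0 i * 'C(k.+1, bump 0 i)%:R * (bump 0 i)%:R ^+ n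
   = - (\sum_(i < k.+1) (-1)^+i * 'C(k, i.+1)%:R * (i.+1%:R)^+n)
     - \sum_(j < k.+1) (-1) ^+ j * 'C(k, j)%:R * j.+1%:R ^+ n :> rat.
  rewrite -sumrN -sumrB; apply: eq_bigr => i _.
  rewrite /bump /= add1n binS natrD exprS; ring.
have e2 : \sum_(i < k) (-1) ^+ bump 0 i * 'C(k, bump 0 i)%:R * (bump 0 i)%:R ^+ n
   = - \sum_(i < k) (-1)^+i * 'C(k, i.+1)%:R * (i.+1%:R)^+n :> rat.
  rewrite -sumrN; apply: eq_bigr => i _.
  rewrite /bump /= add1n exprS; ring.
rewrite e1 e2 hX; ring.
Qed.

Lemma S_rec n k : stirling2 n.+1 k.+1 = k.+1%:R * stirling2 n k.+1 + stirling2 n k.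
Proof.
rewrite !stirlingU U_S U_V factS natrM.
have h1 : (k`!%:R : rat) != 0 by rewrite pnatr_eq0 -lt0n fact_gt0.
have h2 : (k.+1%:R : rat) != 0 by rewrite pnatr_eq0.
rewrite exprS; field.
by rewrite h1 /=; move: h2; rewrite -natr1 addrC.
Qed.

Lemma S_n0 n : stirling2 n.+1 0 = 0.
Proof. by rewrite stirlingU /U big_ord1 /= expr0n /= !mulr0 mul0r. Qed.

Lemma S_0k k : stirling2 0 k.+1 = 0.
Proof.
rewrite stirlingU U_V.
have -> : V 0 k = U 0 k by apply: eq_bigr => i _; rewrite !expr0.
by rewrite subrr mulr0 mul0r.
Qed.

Lemma S_00 : stirling2 0 0 = 1.
Proof. by rewrite stirlingU /U big_ord1 /= !expr0 bin0 fact0 !mul1r. Qed.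

Lemma S_vanish n k : (n < k)%N -> stirling2 n k = 0.
Proof.
elim: n k => [|n IH] [|k] //; first by move=> _; exact: S_0k.
move=> h; rewrite S_rec !IH // ?mulr0 ?addr0 //; lia.
Qed.

Definition Dc (c : rat) (u : nat -> rat) : nat -> rat := fun k => c * k%:R * u k + u k.+1.

Lemma sum_iter n (f : nat -> rat) : \sum_(k < n.+1) stirling2 n k * f k = iter n (Dc 1) f 0%N.
Proof.
elim: n f => [|n IH] f.
  by rewrite big_ord1 S_00 mul1r.
rewrite iterSr -IH /Dc.
rewrite big_ord_recl S_n0 mul0r add0r.
rewrite (eq_bigr (fun i : 'I_n.+1 => i.+1%:R * stirling2 n i.+1 * f i.+1 + stirling2 n i * f i.+1)); last first.
  by move=> i _; rewrite /bump /= S_rec mulrDl.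
rewrite big_split /=.
rewrite [RHS](eq_bigr (fun i : 'I_n.+1 => i%:R * stirling2 n i * f i + stirling2 n i * f i.+1)); last by move=> i _; ring.
rewrite [RHS]big_split /=; congr (_ + _).
transitivity (\sum_(i < n.+2) i%:R * stirling2 n i * f i).
  by rewrite [RHS]big_ord_recl /= !mul0r add0r.
by rewrite big_ord_recr /= S_vanish // mulr0 mul0r addr0.
Qed.
From Stdlib Require Import FunctionalExtensionality.

Definition conv (u v : nat -> rat) : nat -> rat :=
  fun m => \sum_(i < m.+1) 'C(m, i)%:R * u i * v (m - i)%N.

Lemma PL (x y : nat -> rat) m :
  \sum_(i < m.+2) 'C(m.+1, i)%:R * x i * y (m.+1 - i)%N =
  \sum_(i < m.+1) 'C(m, i)%:R * x i.+1 * y (m - i)%N +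
  \sum_(i < m.+1) 'C(m, i)%:R * x i * y (m.+1 - i)%N.
Proof.
rewrite big_ord_recl [X in _ = _ + X]big_ord_recl /=.
rewrite (eq_bigr (fun i : 'I_m.+1 => 'C(m,i)%:R * x i.+1 * y (m-i)%N
     + 'C(m,i.+1)%:R * x i.+1 * y (m-i)%N)); last first.
  by move=> i _; rewrite /bump /= binS natrD; ring.
rewrite big_split /=.
have -> : \sum_(i < m.+1) 'C(m, i.+1)%:R * x i.+1 * y (m - i)%N
   = \sum_(i < m) 'C(m, i.+1)%:R * x i.+1 * y (m - i)%N :> rat.
  by rewrite big_ord_recr /= bin_small // mul0r mul0r addr0.
have -> : \sum_(i < m) 'C(m, bump 0 i)%:R * x (bump 0 i) * y (m.+1 - bump 0 i)%N
   = \sum_(i < m) 'C(m, i.+1)%:R * x i.+1 * y (m - i)%N :> rat.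
  by apply: eq_bigr => i _.
rewrite !bin0; ring.
Qed.

Lemma deriv_conv c (f g : nat -> rat) m :
  Dc c (conv f g) m = conv (Dc c f) g m + conv f (Dc c g) m.
Proof.
rewrite /Dc /conv PL mulr_sumr -!big_split /=.
apply: eq_bigr => i _.
have hi : (i <= m)%N by rewrite -ltnS ltn_ord.
rewrite natrB // subSn //; ring.
Qed.

Lemma iter_add n (u v : nat -> rat) k :
  iter n (Dc 1) (fun j => u j + v j) k = iter n (Dc 1) u k + iter n (Dc 1) v k.
Proof.
elim: n k => [|n IH] k //=.
by rewrite /Dc !IH; ring.
Qed.

Lemma leibniz n (f g : nat -> rat) :
  \sum_(i < n.+1) 'C(n, i)%:R * iter i (Dc 1) f 0%N * iter (n - i) (Dc 1) g 0%N
  = iter n (Dc 1) (conv f g) 0%N.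
Proof.
elim: n f g => [|n IH] f g.
  by rewrite big_ord1 /= /conv big_ord1 /=.
rewrite (PL (fun i => iter i (Dc 1) f 0%N) (fun i => iter i (Dc 1) g 0%N)).
have -> : \sum_(i < n.+1) 'C(n, i)%:R * iter i (Dc 1) f 0%N * iter (n.+1 - i) (Dc 1) g 0%N
   = \sum_(i < n.+1) 'C(n, i)%:R * iter i (Dc 1) f 0%N * iter (n - i) (Dc 1) (Dc 1 g) 0%N.
  apply: eq_bigr => i _.
  have hi : (i <= n)%N by rewrite -ltnS ltn_ord.
  by rewrite subSn // iterSr.
have -> : \sum_(i < n.+1) 'C(n, i)%:R * iter i.+1 (Dc 1) f 0%N * iter (n - i) (Dc 1) g 0%N
   = \sum_(i < n.+1) 'C(n, i)%:R * iter i (Dc 1) (Dc 1 f) 0%N * iter (n - i) (Dc 1) g 0%N.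
  by apply: eq_bigr => i _; rewrite iterSr.
rewrite !IH -iter_add iterSr.
congr (iter n (Dc 1) _ 0%N).
apply: functional_extensionality => k.
by rewrite deriv_conv.
Qed.

Definition c (k : nat) : rat := dfact (2 * (k%:Z) - 3)%R.
Definition fs (k : nat) : rat := (-1)^+k * c k.

Lemma c0 : c 0 = -1.
Proof. by rewrite /c /= /odf big_nat1 /=; field. Qed.

Lemma c_succ j : c j.+1 = odf j.
Proof.
case: j => [|j].
  by rewrite /c /= /odf !big_geq.
rewrite /c.
have -> : (2 * (j.+2)%:Z - 3)%R = Posz (2 * j + 1)%N by lia.
rewrite /=.
have -> : (2 * j + 1 = (j.*2).+1)%N by rewrite -mul2n; lia.
by rewrite /= doubleK.
Qed.

Lemma odfS j : odf j.+1 = odf j * (2 * j.+1%:R - 1).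
Proof. by rewrite /odf big_nat_recr //= natrM. Qed.

Lemma fs_rec k : fs k.+1 = (1 - 2 * k%:R) * fs k.
Proof.
rewrite /fs c_succ; case: k => [|k].
  by rewrite c0 /odf big_geq //=; ring.
rewrite c_succ odfS exprS; ring.
Qed.

Lemma conv_sym (u v : nat -> rat) m : conv u v m = conv v u m.
Proof.
rewrite /conv (reindex_inj rev_ord_inj) /=; apply: eq_bigr => i _.
have hi : (i <= m)%N by rewrite -ltnS ltn_ord.
rewrite subKn // bin_sub //; ring.
Qed.

Lemma Ef : Dc 2 fs = fs.
Proof.
apply: functional_extensionality => k.
by rewrite /Dc fs_rec; ring.
Qed.

Definition h := conv fs fs.

Lemma Eh m : 2 * m%:R * h m + h m.+1 = 2 * h m.
Proof.
have := deriv_conv 2 fs fs m; rewrite Ef /Dc -/h => ->.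
by rewrite mulr_natl mulr2n.
Qed.

Lemma h0 : h 0 = 1.
Proof. rewrite /h /conv big_ord1 /= /fs c0 bin0 subnn expr0; ring. Qed.

Lemma h1 : h 1 = 2.
Proof. have := Eh 0; rewrite h0 mulr0 mul0r add0r mulr1 => ->; done. Qed.

Lemma h2 : h 2 = 0.
Proof. have := Eh 1; rewrite h1 => e; lra. Qed.

Lemma hvan m : h m.+2 = 0.
Proof.
elim: m => [|m IH]; first exact: h2.
by have := Eh m.+2; rewrite IH !mulr0 add0r.
Qed.

Definition pp (k : nat) : rat := if (k < 2)%N then 2 else 0.

Lemma Dh : Dc 1 h = pp.
Proof.
apply: functional_extensionality => -[|[|k]]; rewrite /Dc /pp /=.
- rewrite h1; lra.
- rewrite h1 h2; lra.
- rewrite !hvan; lra.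
Qed.

Lemma Dpp : Dc 1 pp = pp.
Proof.
apply: functional_extensionality => -[|[|k]]; rewrite /Dc /pp /=.
- lra.
- lra.
- lra.
Qed.

Lemma iter_fix n (u : nat -> rat) : Dc 1 u = u -> iter n (Dc 1) u = u.
Proof. by move=> e; elim: n => [|n IH] //=; rewrite IH e. Qed.

Definition qq (k : nat) : rat := if (k < 2)%N then 1 else 0.

Lemma conv_fDf : conv fs (Dc 1 fs) = qq.
Proof.
apply: functional_extensionality => k.
have := deriv_conv 1 fs fs k; rewrite -/h Dh conv_sym => e.
have e2 : conv fs (Dc 1 fs) k = pp k / 2.
  rewrite e; clear e; move: (conv fs (Dc 1 fs) k) => x; lra.
rewrite e2 /pp /qq; case: ifP => _; lra.
Qed.

Lemma Dqq : Dc 1 qq = qq.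
Proof.
apply: functional_extensionality => -[|[|k]]; rewrite /Dc /qq /=.
- lra.
- lra.
- lra.
Qed.

Definition a (n : nat) : rat := iter n (Dc 1) fs 0%N.

Lemma Qid n : (1 <= n)%N -> \sum_(i < n.+1) 'C(n, i)%:R * a i * a (n - i)%N = 2.
Proof.
case: n => [|n] // _.
rewrite /a leibniz -/h iterSr Dh iter_fix ?Dpp //.
Qed.

Lemma Pid n : \sum_(i < n.+1) 'C(n, i)%:R * a i * a (n - i).+1 = 1.
Proof.
rewrite /a.
have -> : \sum_(i < n.+1) 'C(n, i)%:R * iter i (Dc 1) fs 0%N * iter (n - i).+1 (Dc 1) fs 0%N
  = \sum_(i < n.+1) 'C(n, i)%:R * iter i (Dc 1) fs 0%N * iter (n - i) (Dc 1) (Dc 1 fs) 0%N.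
  by apply: eq_bigr => i _; rewrite iterSr.
by rewrite leibniz conv_fDf iter_fix // Dqq.
Qed.

Lemma a0 : a 0 = -1.
Proof. by rewrite /a /= /fs c0 expr0 mul1r. Qed.

Lemma a1 : a 1 = -1.
Proof. by rewrite /a /= /Dc fs_rec /fs c0 expr0 !mulr0 !mul0r add0r subr0 !mul1r. Qed.

Definition b (n : nat) : rat := (-1)^+n * a n.

Lemma bpos m : forall n, (0 < n)%N -> (n <= m)%N -> 0 <= b n.
Proof.
elim: m => [|m IH] n hn hnm; first by lia.
case: (ltnP n m.+1) => hlt; first by apply: IH => //; lia.
have -> : n = m.+1 by lia.
clear n hn hnm hlt.
case: m IH => [|m] IH.
  by rewrite /b a1 expr1 mulrNN mulr1 ler01.
set S1 := \sum_(i < m) 'C(m.+1, i.+1)%:R * a i.+1 * a (m - i).+1.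
set S2 := \sum_(i < m) 'C(m.+1, i.+1)%:R * a i.+1 * a (m - i)%N.
have Q := @Qid m.+1 isT.
have P := Pid m.+1.
rewrite big_ord_recl big_ord_recr /= in Q.
rewrite big_ord_recl big_ord_recr /= in P.
have eS2 : \sum_(i < m) 'C(m.+1, bump 0 i)%:R * a (bump 0 i) * a (m.+1 - bump 0 i)%N = S2.
  by apply: eq_bigr.
have eS1 : \sum_(i < m) 'C(m.+1, bump 0 i)%:R * a (bump 0 i) * a (m.+1 - bump 0 i).+1 = S1.
  by apply: eq_bigr.
rewrite eS2 /bump /= add1n subn0 subnn bin0 binn a0 in Q.
rewrite eS1 /bump /= add1n subn0 subnn bin0 binn a0 a1 in P.
have ea : a m.+2 = S1 - S2 / 2 by lra.
set T1 := \sum_(i < m) 'C(m.+1, i.+1)%:R * b i.+1 * b (m - i).+1.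
set T2 := \sum_(i < m) 'C(m.+1, i.+1)%:R * b i.+1 * b (m - i)%N.
have hT1 : T1 = (-1)^+m * S1.
  rewrite /T1 /S1 mulr_sumr; apply: eq_bigr => i _.
  have hi : (i < m)%N := ltn_ord i.
  have es : (-1)^+m = (-1)^+(m - i) * (-1)^+i :> rat by rewrite -exprD subnK // ltnW.
  rewrite /b !exprS es; ring.
have hT2 : T2 = (-1)^+m.+1 * S2.
  rewrite /T2 /S2 mulr_sumr; apply: eq_bigr => i _.
  have hi : (i < m)%N := ltn_ord i.
  have es : (-1)^+m = (-1)^+(m - i) * (-1)^+i :> rat by rewrite -exprD subnK // ltnW.
  rewrite /b !exprS es; ring.
have T1p : 0 <= T1.
  apply: sumr_ge0 => i _; have hi : (i < m)%N := ltn_ord i.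
  by rewrite -mulrA mulr_ge0 ?ler0n // mulr_ge0 // IH //; lia.
have T2p : 0 <= T2.
  apply: sumr_ge0 => i _; have hi : (i < m)%N := ltn_ord i.
  by rewrite -mulrA mulr_ge0 ?ler0n // mulr_ge0 // IH //; lia.
have -> : b m.+2 = T1 + T2 / 2.
  by rewrite /b ea hT1 hT2 !exprS; field.
move: T1p T2p; clearbody T1 T2 => T1p T2p; lra.
Qed.

Theorem theorem6p4 (n : nat) : (1 <= n)%N -> 0 <= d n.
Proof.
move=> hn.
have es : \sum_(0 <= k < n.+1) (-1) ^+ k * stirling2 n k * dfact (2 * (k%:Z) - 3)%R = a n.
  rewrite big_mkord /a -sum_iter; apply: eq_bigr => k _.
  rewrite /fs /c; ring.
rewrite /d es mulrAC.
apply: divr_ge0; last exact: ler0n.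
exact: (bpos n n hn (leqnn n)).
Qed.
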